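(* Let $\alpha_1,\dots,\alpha_6\in\mathbb{C}$ with $2\alpha_1+\alpha_2+\dots+\alpha_6=1$. The rational symplectic transformation $$S_1:(q_1,p_1,q_2,p_2,t,s)\mapsto(X,Y,Z,W,T,S)=\Big(q_1,\,p_1+\frac{q_2p_2-\alpha_1-\alpha_3}{q_1},\,\frac{q_2}{q_1},\,p_2q_1,\,t,\,\frac{s}{t}\Big)$$ transforms the Hamiltonian system with Hamiltonians $H'_1,H'_2$ into the Hamiltonian system (in variables $(X,Y,Z,W)$, times $(T,S)$) with Hamiltonians $H''_1,H''_2$, where $H''_1=H_{VI}(q_1,p_1,t;\alpha_1+\alpha_4+\alpha_6,\alpha_1+\alpha_2,\alpha_3,\alpha_1+\alpha_5,-\alpha_1-\alpha_3)-\frac{\alpha_4}{t(ts-1)}q_1p_1+\frac{\alpha_3(s-1)}{(t-1)(ts-1)}q_2p_2+\frac{s}{ts-1}p_1p_2-\frac{1}{t-1}p_1q_2p_2+\frac{2(s-1)}{(t-1)(ts-1)}q_1p_1q_2p_2-\frac{q_1q_2(q_1p_1+\alpha_3)\{(ts-1)p_2-(t-1)(q_2p_2+\alpha_4)\}}{t(t-1)(ts-1)}$ and $H''_2=\pi(H''_1)$, with $\pi$ the substitution $(q_1,p_1,q_2,p_2,t,s;\alpha_1,\dots,\alpha_6)\mapsto(q_2,p_2,q_1,p_1,s,t;-\alpha_1-\alpha_2-\alpha_3-\alpha_4,\alpha_2,\alpha_4,\alpha_3,1-\alpha_6,1-\alpha_5)$ (the variables of $H''_i$ being renamed $(X,Y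,Z,W,T,S)\to(q_1,p_1,q_2,p_2,t,s)$).
   Context: $H_{VI}(q,p,t;a_0,a_1,a_2,a_3,a_4)=\frac{1}{t(t-1)}\big[p^2(q-t)(q-1)q-\{(a_0-1)(q-1)q+a_3(q-t)q+a_4(q-t)(q-1)\}p+a_2(a_1+a_2)(q-t)\big]$. A Hamiltonian system with Hamiltonians $K_1,K_2$ means $dq_j=\frac{\partial K_1}{\partial p_j}dt+\frac{\partial K_2}{\partial p_j}ds$, $dp_j=-\frac{\partial K_1}{\partial q_j}dt-\frac{\partial K_2}{\partial q_j}ds$ ($j=1,2$). $H'_1=H_{VI}(q_1,p_1,t;\alpha_1+\alpha_4+\alpha_6,-\alpha_1-\alpha_2,\alpha_2,\alpha_1+\alpha_5,\alpha_1+\alpha_3)+\alpha_2\Big\{\frac{(s-1)q_2}{(t-1)(t-s)}-\frac{sq_1}{t(t-s)}+\frac{q_1q_2}{t(t-1)}\Big\}p_2+\alpha_4\frac{(q_1-q_2)p_1}{t-s}+\Big\{\frac{2(s-1)q_1q_2}{(t-1)(t-s)}-\frac{tq_2^2+sq_1^2}{t(t-s)}+\frac{(q_1^2+t)q_2}{t(t-1)}\Big\}p_1p_2$, and $H'_2$ obtained from $H'_1$ by $q_1\leftrightarrow q_2$, $p_1\leftrightarrow p_2$, $t\leftrightarrow s$, $\alpha_2\leftrightarrow\alpha_4$. *)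

(* Defs.v *)
(* The complex numbers are R[i] for an
   arbitrary realType R (mathcomp-real-closed's complex), viewed as a normed
   module over itself via R[i]^o. *)
From HB Require Import structures.
From mathcomp Require Import all_boot all_order all_algebra.
From mathcomp Require Import all_classical all_reals all_analysis.
From mathcomp Require Import complex.
Import Order.TTheory GRing.Theory Num.Theory.

Set Implicit Arguments.
Unset Strict Implicit.
Unset Printing Implicit Defensive.

Local Open Scope ring_scope.
Local Open Scope classical_set_scope.

Section Painleve.
Variable R : realType.
Local Notation C := (R[i]).

(* Hamiltonians are functions of (q1, p1, q2, p2, t, s) *)
Definition ham := C -> C -> C -> C -> C -> C -> C.

Definition HVI (q p t a0 a1 a2 a3 a4 : C) : C :=
  (p ^+ 2 * (q - t) * (q - 1) * q
   - ((a0 - 1) * (q - 1) * q + a3 * (q - t) * q + a4 * (q - t) * (q - 1)) * p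
   + a2 * (a1 + a2) * (q - t)) / (t * (t - 1)).

Definition H1' (a1 a2 a3 a4 a5 a6 : C) : ham := fun q1 p1 q2 p2 t s =>
  HVI q1 p1 t (a1 + a4 + a6) (- a1 - a2) a2 (a1 + a5) (a1 + a3)
  + a2 * ((s - 1) * q2 / ((t - 1) * (t - s)) - s * q1 / (t * (t - s))
          + q1 * q2 / (t * (t - 1))) * p2
  + a4 * ((q1 - q2) * p1 / (t - s))
  + (2 * (s - 1) * q1 * q2 / ((t - 1) * (t - s))
     - (t * q2 ^+ 2 + s * q1 ^+ 2) / (t * (t - s))
     + (q1 ^+ 2 + t) * q2 / (t * (t - 1))) * p1 * p2.

Definition H2' (a1 a2 a3 a4 a5 a6 : C) : ham := fun q1 p1 q2 p2 t s =>
  H1' a1 a4 a3 a2 a5 a6 q2 p2 q1 p1 s t.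

Definition H1'' (a1 a2 a3 a4 a5 a6 : C) : ham := fun q1 p1 q2 p2 t s =>
  HVI q1 p1 t (a1 + a4 + a6) (a1 + a2) a3 (a1 + a5) (- a1 - a3)
  - a4 / (t * (t * s - 1)) * q1 * p1
  + a3 * (s - 1) / ((t - 1) * (t * s - 1)) * q2 * p2
  + s / (t * s - 1) * p1 * p2
  - 1 / (t - 1) * p1 * q2 * p2
  + 2 * (s - 1) / ((t - 1) * (t * s - 1)) * q1 * p1 * q2 * p2
  - q1 * q2 * (q1 * p1 + a3) * ((t * s - 1) * p2 - (t - 1) * (q2 * p2 + a4))
    / (t * (t - 1) * (t * s - 1)).

Definition H2'' (a1 a2 a3 a4 a5 a6 : C) : ham := fun q1 p1 q2 p2 t s =>
  H1'' (- a1 - a2 - a3 - a4) a2 a4 a3 (1 - a6) (1 - a5) q2 p2 q1 p1 s t.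

Definition dq1 (K : ham) q1 p1 q2 p2 t s : C :=
  derive1 (fun x : C => (K x p1 q2 p2 t s : C^o)) q1.
Definition dp1 (K : ham) q1 p1 q2 p2 t s : C :=
  derive1 (fun x : C => (K q1 x q2 p2 t s : C^o)) p1.
Definition dq2 (K : ham) q1 p1 q2 p2 t s : C :=
  derive1 (fun x : C => (K q1 p1 x p2 t s : C^o)) q2.
Definition dp2 (K : ham) q1 p1 q2 p2 t s : C :=
  derive1 (fun x : C => (K q1 p1 q2 x t s : C^o)) p2.

Definition e_t : C^o * C^o := (1, 0).
Definition e_s : C^o * C^o := (0, 1).

Definition ham_solution (K1 K2 : ham) (U : set (C^o * C^o))
    (q1 p1 q2 p2 : C^o * C^o -> C^o) : Prop :=
  open U /\
  forall x, U x ->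
    let: (t, s) := x in
    let v := (q1 x, p1 x, q2 x, p2 x) in
    let: (Q1, P1, Q2, P2) := v in
    [/\ [/\ differentiable q1 x, differentiable p1 x,
            differentiable q2 x & differentiable p2 x],
        [/\ 'D_e_t q1 x = dp1 K1 Q1 P1 Q2 P2 t s,
            'D_e_t p1 x = - dq1 K1 Q1 P1 Q2 P2 t s,
            'D_e_t q2 x = dp2 K1 Q1 P1 Q2 P2 t s &
            'D_e_t p2 x = - dq2 K1 Q1 P1 Q2 P2 t s] &
        [/\ 'D_e_s q1 x = dp1 K2 Q1 P1 Q2 P2 t s,
            'D_e_s p1 x = - dq1 K2 Q1 P1 Q2 P2 t s,
            'D_e_s q2 x = dp2 K2 Q1 P1 Q2 P2 t s &
            'D_e_s p2 x = - dq2 K2 Q1 P1 Q2 P2 t s]].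

End Painleve.

(* Main.v *)
Require Import Defs.
From HB Require Import structures.
From mathcomp Require Import all_boot all_order all_algebra.
From mathcomp Require Import all_classical all_reals all_analysis.
From mathcomp Require Import complex.
From mathcomp Require Import ring lra.
Import Order.TTheory GRing.Theory Num.Theory.
Import numFieldNormedType.Exports.
Local Open Scope ring_scope.
Local Open Scope classical_set_scope.

Section G.
Variables (K : numFieldType) (V : normedModType K).
Definition isd (x v : V) (f : V -> K^o) (df : K) := is_derive x v f df.
Implicit Types (f g : V -> K^o) (x v : V) (df dg : K).
Lemma isdM {f g x v df dg} : isd x v f df -> isd x v g dg ->
  isd x v (fun y => f y * g y) (f x * dg + g x * df).
Proof. rewrite /isd => H1 H2; exact: is_deriveM. Qed.
Lemma isdD {f g x v df dg} : isd x v f df -> isd x v g dg ->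
  isd x v (fun y => f y + g y) (df + dg).
Proof. rewrite /isd => H1 H2; exact: is_deriveD. Qed.
Lemma isdB {f g x v df dg} : isd x v f df -> isd x v g dg ->
  isd x v (fun y => f y - g y) (df - dg).
Proof. rewrite /isd => H1 H2; exact: is_deriveB. Qed.
Lemma isdN {f x v df} : isd x v f df ->
  isd x v (fun y => - f y) (- df).
Proof. rewrite /isd => H1; exact: is_deriveN. Qed.
Lemma isdC {a : K^o} {x v} : isd x v (fun _ => a) 0.
Proof. exact: is_derive_cst. Qed.
Lemma isdX {f x v df} : isd x v f df ->
  isd x v (fun y => f y ^+ 2) (2 * f x * df).
Proof. rewrite /isd => H; have -> : (fun y => f y ^+ 2) = (fun y => f y * f y).
  by apply: funext => y; rewrite expr2.
apply: is_derive_eq. change (f x * df + f x * df = 2 * f x * df). ring. Qed.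
Lemma isdV {f x v df} : isd x v f df -> f x != 0 ->
  isd x v (fun y => (f y)^-1) (- ((f x)^+2)^-1 * df).
Proof. rewrite /isd => H fx0; have dH := @ex_derive _ _ _ _ _ _ _ H; apply: DeriveDef.
  by apply: derivableV.
rewrite deriveV //.
by rewrite (@derive_val _ _ _ _ _ _ _ H). Qed.
Lemma isd_eq {f x v d} d' : isd x v f d -> d = d' -> isd x v f d'.
Proof. by move=> H <-. Qed.
Lemma isd_D {f x v d} : isd x v f d -> 'D_v f x = d.
Proof. by move=> H; rewrite (@derive_val _ _ _ _ _ _ _ H). Qed.
Lemma isd_diff {f x} v : differentiable f x -> isd x v f ('D_v f x).
Proof. by move=> H; apply: DeriveDef => //; exact: diff_derivable. Qed.

Lemma dfM {f g x} : differentiable f x -> differentiable g x ->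
  differentiable (fun y => f y * g y) x.
Proof. move=> *; exact: differentiableM. Qed.
Lemma dfD {f g x} : differentiable f x -> differentiable g x ->
  differentiable (fun y => f y + g y) x.
Proof. move=> *; exact: differentiableD. Qed.
Lemma dfB {f g x} : differentiable f x -> differentiable g x ->
  differentiable (fun y => f y - g y) x.
Proof. move=> *; exact: differentiableB. Qed.
Lemma dfC {a : K^o} {x} : differentiable (fun _ : V => a) x.
Proof. exact: differentiable_cst. Qed.
Lemma dfV {f x} : differentiable f x -> f x != 0 ->
  differentiable (fun y => (f y)^-1) x.
Proof. move=> *; exact: differentiableV. Qed.

Lemma D_affine {W : normedModType K} (g G : V -> W) (y x v w : V) :
  (forall h : K, G (h *: v + y) = g (h *: w + x)) -> G y = g x ->
  'D_v G y = 'D_w g x.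
Proof.
move=> H1 H2; rewrite /derive /=.
have -> : (fun h : K => h^-1 *: ((G \o shift y) (h *: v) - G y)) =
   (fun h : K => h^-1 *: ((g \o shift x) (h *: w) - g x)).
  by apply: funext => h /=; rewrite H1 H2.
by [].
Qed.

Lemma D_lin {W : normedModType K} (g : V -> W) x (u w : V) (c : K) :
  differentiable g x -> 'D_(u + c *: w) g x = 'D_u g x + c *: 'D_w g x.
Proof. by move=> H; rewrite !deriveE // linearD linearZ. Qed.
End G.
Arguments isd {K V}.
Arguments isd_diff {K V f x} v.
Arguments isd_D {K V f x v d}.

Section G2.
Variables (K : numFieldType).
Lemma dval (f : K -> K^o) (x : K) d : isd x 1 f d -> derive1 f x = d.
Proof. by move=> H; rewrite derive1E (@derive_val _ _ _ _ _ _ _ H). Qed.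
End G2.

Lemma isdI {K : numFieldType} {x v : K} : isd x v (fun y : K => (y : K^o)) v.
Proof. exact: is_derive_id. Qed.

Ltac isd := repeat first [ eassumption | apply: isdC | apply: isdI | apply: isdD | apply: isdB | apply: isdN | apply: isdM | apply: isdX | apply: isdV ].
Ltac dfs := repeat first [ assumption | apply: dfC | apply: dfD | apply: dfB | apply: dfM | apply: dfV ].

Section T.
Variable R : realType.
Local Notation C := (R[i]).
Local Notation P := (C^o * C^o)%type.
Lemma scE (a b : C^o) : a *: b = a * b. Proof. by []. Qed.
Lemma dfst (x : P) : differentiable (@fst C^o C^o) x.
Proof. apply: linear_differentiable => -[a b]; exact: cvg_fst. Qed.
Lemma dsnd (x : P) : differentiable (@snd C^o C^o) x.
Proof. apply: linear_differentiable => -[a b]; exact: cvg_snd. Qed.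
Lemma dorig (y : P) : differentiable (fun y : P => (y.1, y.2 * y.1) : P) y.
Proof. apply: differentiable_pair; first exact: dfst.
apply: dfM; [exact: dsnd | exact: dfst]. Qed.
Lemma eTS (S : C) : ((1, S) : P) = e_t R + S *: e_s R.
Proof. rewrite /e_t /e_s; congr pair; rewrite /=.
  by rewrite scaler0 addr0.
by rewrite add0r [S%:A]mulr1. Qed.
Lemma e0S (T : C) : ((0, T) : P) = T *: e_s R.
Proof. rewrite /e_s; congr pair; rewrite /=.
  by rewrite scaler0.
by rewrite [T%:A]mulr1. Qed.

End T.

Ltac isdh H1 H2 H3 H4 H5 := repeat first [ exact: H1 | exact: H2 | exact: H3 | exact: H4 | exact: H5 | apply: isdC | apply: isdD | apply: isdB | apply: isdN | apply: isdM | apply: isdV ].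
Ltac dvals := repeat (erewrite dval; last by isd).
Ltac isd1 := repeat first [ apply: isdC | apply: isdI | apply: isdD | apply: isdB | apply: isdN | apply: isdM | apply: isdX ].
Ltac fin := rewrite /dp1 /dq1 /dp2 /dq2 /H1'' /H2'' /H1' /H2' /HVI; repeat (erewrite dval; last by isd1); rewrite /=.

Theorem mainTheorem6 (R : realType) (a1 a2 a3 a4 a5 a6 : R[i])
  (U : set (R[i]^o * R[i]^o)) (q1 p1 q2 p2 : R[i]^o * R[i]^o -> R[i]^o) :
  2 * a1 + a2 + a3 + a4 + a5 + a6 = 1 ->
  (forall x, U x -> [/\ x.1 != 0, x.1 != 1, x.2 != 0, x.2 != 1 & x.1 != x.2]) ->
  (forall x, U x -> q1 x != 0) ->
  ham_solution (H1' a1 a2 a3 a4 a5 a6) (H2' a1 a2 a3 a4 a5 a6) U q1 p1 q2 p2 ->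
  let V := (fun x : R[i]^o * R[i]^o => (x.1, x.2 / x.1)) @` U in
  let orig (y : R[i]^o * R[i]^o) : R[i]^o * R[i]^o := (y.1, y.2 * y.1) in
  let X := fun y => q1 (orig y) in
  let Y := fun y => p1 (orig y) + (q2 (orig y) * p2 (orig y) - a1 - a3) / q1 (orig y) in
  let Z := fun y => q2 (orig y) / q1 (orig y) in
  let W := fun y => p2 (orig y) * q1 (orig y) in
  ham_solution (H1'' a1 a2 a3 a4 a5 a6) (H2'' a1 a2 a3 a4 a5 a6) V X Y Z W.
Proof.
move=> hsum hU hq [oU hsol] V orig X Y Z W.
have e6 : a6 = 1 - (2 * a1 + a2 + a3 + a4 + a5) by have := congr1 (fun z => z - (2 * a1 + a2 + a3 + a4 + a5)) hsum; rewrite /= => <-; ring.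
subst a6.
have Vdef : V = orig @^-1` U.
  apply/seteqP; split => y.
    case=> -[t s] Uts <-; rewrite /orig /=.
    have [ht _ _ _ _] := hU _ Uts.
    by rewrite divfK.
  move=> Uo; exists (orig y) => //.
  have [ht _ _ _ _] := hU _ Uo.
  move: ht; rewrite /orig /= => ht.
  by rewrite mulfK //; case: y {Uo ht}.
split.
  rewrite Vdef; apply: open_comp => // y _.
  apply: differentiable_continuous; exact: dorig.
case=> T S; rewrite Vdef => Ux.
have [hT hT1 hST hST1 hTST] := hU _ Ux.
move: hT hT1 hST hST1 hTST; rewrite /= => hT hT1 hST hST1 hTST.
have hS : S != 0 by move: hST; rewrite mulf_eq0 negb_or => /andP[].
have hT1' : T - 1 != 0 by rewrite subr_eq0.
have hST1' : S * T - 1 != 0 by rewrite subr_eq0.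
have hTS1 : T * S - 1 != 0 by rewrite mulrC subr_eq0.
have hTST' : T - S * T != 0 by rewrite subr_eq0.
have hSTT : S * T - T != 0 by rewrite subr_eq0 eq_sym.
have hS1 : S - 1 != 0.
  by apply: contra hTST; rewrite subr_eq0 => /eqP ->; rewrite mul1r.
have hq0 : q1 ((T, S * T) : R[i]^o * R[i]^o) != 0 := hq _ Ux.
have := hsol ((T, S * T) : R[i]^o * R[i]^o) Ux; move=> /= -[[d1 d2 d3 d4] [et1 et2 et3 et4] [es1 es2 es3 es4]].
have hTx : forall g : R[i]^o * R[i]^o -> R[i]^o, differentiable g ((T, S * T) : R[i]^o * R[i]^o) ->
  'D_(e_t R) (fun y : R[i]^o * R[i]^o => g (orig y)) ((T, S) : R[i]^o * R[i]^o) = 'D_(e_t R) g ((T, S * T) : R[i]^o * R[i]^o) + S * 'D_(e_s R) g ((T, S * T) : R[i]^o * R[i]^o).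
  move=> g dg; rewrite (@D_affine _ _ _ g _ _ ((T, S * T) : R[i]^o * R[i]^o) _ (1, S)).
  - by rewrite eTS D_lin.
  - move=> h; congr g; rewrite /orig /e_t /=; congr pair; rewrite /= !scE; ring.
  - by [].
have hSx : forall g : R[i]^o * R[i]^o -> R[i]^o, differentiable g ((T, S * T) : R[i]^o * R[i]^o) ->
  'D_(e_s R) (fun y : R[i]^o * R[i]^o => g (orig y)) ((T, S) : R[i]^o * R[i]^o) = T * 'D_(e_s R) g ((T, S * T) : R[i]^o * R[i]^o).
  move=> g dg; rewrite (@D_affine _ _ _ g _ _ ((T, S * T) : R[i]^o * R[i]^o) _ (0, T)).
  - by rewrite e0S !deriveE // linearZ.
  - move=> h; congr g; rewrite /orig /e_s /=; congr pair; rewrite /= !scE; ring.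
  - by [].
have hDx : forall g : R[i]^o * R[i]^o -> R[i]^o, differentiable g ((T, S * T) : R[i]^o * R[i]^o) ->
  differentiable (fun y : R[i]^o * R[i]^o => g (orig y)) ((T, S) : R[i]^o * R[i]^o).
  move=> g dg; apply: differentiable_comp; [exact: dorig | exact: dg].
have [Yg eYg] : {Yg : R[i]^o * R[i]^o -> R[i]^o | Yg = fun z => p1 z + (q2 z * p2 z - a1 - a3) / q1 z} by eexists.
have [Zg eZg] : {Zg : R[i]^o * R[i]^o -> R[i]^o | Zg = fun z => q2 z / q1 z} by eexists.
have [Wg eWg] : {Wg : R[i]^o * R[i]^o -> R[i]^o | Wg = fun z => p2 z * q1 z} by eexists.
have eY : Y = (fun y => Yg (orig y)) by rewrite eYg.
have eZ : Z = (fun y => Zg (orig y)) by rewrite eZg.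
have eW : W = (fun y => Wg (orig y)) by rewrite eWg.
have dY : differentiable Yg ((T, S * T) : R[i]^o * R[i]^o) by rewrite eYg; dfs.
have dZ : differentiable Zg ((T, S * T) : R[i]^o * R[i]^o) by rewrite eZg; dfs.
have dW : differentiable Wg ((T, S * T) : R[i]^o * R[i]^o) by rewrite eWg; dfs.
have i1t := isd_diff (e_t R) d1. have i2t := isd_diff (e_t R) d2.
have i3t := isd_diff (e_t R) d3. have i4t := isd_diff (e_t R) d4.
have i1s := isd_diff (e_s R) d1. have i2s := isd_diff (e_s R) d2.
have i3s := isd_diff (e_s R) d3. have i4s := isd_diff (e_s R) d4.
split; split.
- exact: (hDx q1 d1).
- rewrite eY; exact: (hDx Yg dY).
- rewrite eZ; exact: (hDx Zg dZ).
- rewrite eW; exact: (hDx Wg dW).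
- rewrite /X eY eZ eW (hTx q1 d1).
  rewrite ?et1 ?et2 ?et3 ?et4 ?es1 ?es2 ?es3 ?es4 eYg eZg eWg /orig /=.
  move: (q1 ((T, S * T) : R[i]^o * R[i]^o)) (p1 ((T, S * T) : R[i]^o * R[i]^o)) (q2 ((T, S * T) : R[i]^o * R[i]^o)) (p2 ((T, S * T) : R[i]^o * R[i]^o)) hq0 => Q1 P1 Q2 P2 hQ1.
  fin; field; (repeat (apply/andP; split)); assumption.
- rewrite /X eY eZ eW (hTx Yg dY).
  erewrite (@isd_D _ _ Yg _ (e_t R)); last by rewrite eYg; isdh i1t i2t i3t i4t hq0.
  eassert (iS : isd ((T, S * T) : R[i]^o * R[i]^o) (e_s R) Yg _); first by rewrite eYg; isdh i1s i2s i3s i4s hq0.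
  rewrite (isd_D iS).
  rewrite ?et1 ?et2 ?et3 ?et4 ?es1 ?es2 ?es3 ?es4 eYg eZg eWg /orig /=.
  move: (q1 ((T, S * T) : R[i]^o * R[i]^o)) (p1 ((T, S * T) : R[i]^o * R[i]^o)) (q2 ((T, S * T) : R[i]^o * R[i]^o)) (p2 ((T, S * T) : R[i]^o * R[i]^o)) hq0 => Q1 P1 Q2 P2 hQ1.
  fin; field; (repeat (apply/andP; split)); assumption.
- rewrite /X eY eZ eW (hTx Zg dZ).
  erewrite (@isd_D _ _ Zg _ (e_t R)); last by rewrite eZg; isdh i1t i2t i3t i4t hq0.
  eassert (iS : isd ((T, S * T) : R[i]^o * R[i]^o) (e_s R) Zg _); first by rewrite eZg; isdh i1s i2s i3s i4s hq0.
  rewrite (isd_D iS).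
  rewrite ?et1 ?et2 ?et3 ?et4 ?es1 ?es2 ?es3 ?es4 eYg eZg eWg /orig /=.
  move: (q1 ((T, S * T) : R[i]^o * R[i]^o)) (p1 ((T, S * T) : R[i]^o * R[i]^o)) (q2 ((T, S * T) : R[i]^o * R[i]^o)) (p2 ((T, S * T) : R[i]^o * R[i]^o)) hq0 => Q1 P1 Q2 P2 hQ1.
  fin; field; (repeat (apply/andP; split)); assumption.
- rewrite /X eY eZ eW (hTx Wg dW).
  erewrite (@isd_D _ _ Wg _ (e_t R)); last by rewrite eWg; isdh i1t i2t i3t i4t hq0.
  eassert (iS : isd ((T, S * T) : R[i]^o * R[i]^o) (e_s R) Wg _); first by rewrite eWg; isdh i1s i2s i3s i4s hq0.
  rewrite (isd_D iS).
  rewrite ?et1 ?et2 ?et3 ?et4 ?es1 ?es2 ?es3 ?es4 eYg eZg eWg /orig /=.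
  move: (q1 ((T, S * T) : R[i]^o * R[i]^o)) (p1 ((T, S * T) : R[i]^o * R[i]^o)) (q2 ((T, S * T) : R[i]^o * R[i]^o)) (p2 ((T, S * T) : R[i]^o * R[i]^o)) hq0 => Q1 P1 Q2 P2 hQ1.
  fin; field; (repeat (apply/andP; split)); assumption.
- rewrite /X eY eZ eW (hSx q1 d1).
  rewrite ?et1 ?et2 ?et3 ?et4 ?es1 ?es2 ?es3 ?es4 eYg eZg eWg /orig /=.
  move: (q1 ((T, S * T) : R[i]^o * R[i]^o)) (p1 ((T, S * T) : R[i]^o * R[i]^o)) (q2 ((T, S * T) : R[i]^o * R[i]^o)) (p2 ((T, S * T) : R[i]^o * R[i]^o)) hq0 => Q1 P1 Q2 P2 hQ1.
  fin; field; (repeat (apply/andP; split)); assumption.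
- rewrite /X eY eZ eW (hSx Yg dY).
  eassert (iS : isd ((T, S * T) : R[i]^o * R[i]^o) (e_s R) Yg _); first by rewrite eYg; isdh i1s i2s i3s i4s hq0.
  rewrite (isd_D iS).
  rewrite ?et1 ?et2 ?et3 ?et4 ?es1 ?es2 ?es3 ?es4 eYg eZg eWg /orig /=.
  move: (q1 ((T, S * T) : R[i]^o * R[i]^o)) (p1 ((T, S * T) : R[i]^o * R[i]^o)) (q2 ((T, S * T) : R[i]^o * R[i]^o)) (p2 ((T, S * T) : R[i]^o * R[i]^o)) hq0 => Q1 P1 Q2 P2 hQ1.
  fin; field; (repeat (apply/andP; split)); assumption.
- rewrite /X eY eZ eW (hSx Zg dZ).
  eassert (iS : isd ((T, S * T) : R[i]^o * R[i]^o) (e_s R) Zg _); first by rewrite eZg; isdh i1s i2s i3s i4s hq0.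
  rewrite (isd_D iS).
  rewrite ?et1 ?et2 ?et3 ?et4 ?es1 ?es2 ?es3 ?es4 eYg eZg eWg /orig /=.
  move: (q1 ((T, S * T) : R[i]^o * R[i]^o)) (p1 ((T, S * T) : R[i]^o * R[i]^o)) (q2 ((T, S * T) : R[i]^o * R[i]^o)) (p2 ((T, S * T) : R[i]^o * R[i]^o)) hq0 => Q1 P1 Q2 P2 hQ1.
  fin; field; (repeat (apply/andP; split)); assumption.
- rewrite /X eY eZ eW (hSx Wg dW).
  eassert (iS : isd ((T, S * T) : R[i]^o * R[i]^o) (e_s R) Wg _); first by rewrite eWg; isdh i1s i2s i3s i4s hq0.
  rewrite (isd_D iS).
  rewrite ?et1 ?et2 ?et3 ?et4 ?es1 ?es2 ?es3 ?es4 eYg eZg eWg /orig /=.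
  move: (q1 ((T, S * T) : R[i]^o * R[i]^o)) (p1 ((T, S * T) : R[i]^o * R[i]^o)) (q2 ((T, S * T) : R[i]^o * R[i]^o)) (p2 ((T, S * T) : R[i]^o * R[i]^o)) hq0 => Q1 P1 Q2 P2 hQ1.
  fin; field; (repeat (apply/andP; split)); assumption.
Qed.
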